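(* Assume (C1) and (C2). Let $d_0\in(0,+\infty)$. Every Cerami sequence $\{u_k\}\subset\mathcal{D}$ of $I$ at level $d_0$ has at least one subsequence that converges in $\mathcal{D}$. Here a Cerami sequence at level $d_0$ is a sequence with $I(u_k)\to d_0$ and $\|I'(u_k)\|(1+\|u_k\|)\to0$.
   Context: Fix real numbers $p,q,r$ with $1<p<q$, $\frac p2$ a positive integer, and $r\ge1$, and functions $a,b,c:\mathbb{Z}\to(0,+\infty)$. Conditions: - (C1) There is $b_0>0$ with $b(n)\ge b_0$ for all $n$ and $b(n)\to+\infty$ as $|n|\to\infty$. - (C2) There is $c_0>0$ with $c(n)\le c_0$ for all $n$ and $\sum_n c(n)<+\infty$. Notation and spaces: - $\Delta u(n)=u(n+1)-u(n)$. - $E$ is the set of real sequences $u$ with $\|u\|:=\big(\sum_n[a(n)|\Delta u(n)|^p+b(n)|u(n)|^p]\big)^{1/p}<\infty$. - $\mathcal{D}=\{u\in E:\sum_n c(n)|u(n)|^q\ln|u(n)|^r<+\infty\}$, where terms with $u(n)=0$ are read as $0$. It carries the norm $\|\cdot\|$. For $u,v\in\mathcal{D}$: - $I(u)=\frac1p\|u\|^p+\frac{r}{q^2}\sum_n c(n)|u(n)|^q-\frac1q\sum_n c(n)|u(n)|^q\ln|u(n)|^r$. - $\langle I'(u),v\rangle=\sum_n[a(n)|\Delta u(n)|^{p-2}\Delta u(n)\Delta v(n)+b(n)|u(n)|^{p-2}u(n)v(n)]-\sum_n c(n)|u(n)|^{q-2}u(n)v(n)\ln|u(n)|^r$. - $\|I'(u)\|$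 denotes the dual norm $\sup\{|\langle I'(u),v\rangle|:v\in\mathcal{D},\|v\|\le1\}$. *)

(* Defs.v *)
From Stdlib Require Import Reals Lra ZArith.
From Coquelicot Require Import Coquelicot.
Open Scope R_scope.

(* real power with the convention x^y = 0 for x <= 0 (we only apply it to |.|) *)
Definition rpow (x y : R) : R := if Rle_dec x 0 then 0 else Rpower x y.

(* sums over Z: split into n >= 0 and n <= -1 *)
Definition posZ (f : Z -> R) : nat -> R := fun n => f (Z.of_nat n).
Definition negZ (f : Z -> R) : nat -> R := fun n => f (- Z.of_nat n - 1)%Z.

Definition summableZ (f : Z -> R) : Prop :=
  ex_series (fun n => Rabs (posZ f n)) /\ ex_series (fun n => Rabs (negZ f n)).

Definition sumZ (f : Z -> R) : R := Series (posZ f) + Series (negZ f).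

Definition Delta (u : Z -> R) (n : Z) : R := u (n + 1)%Z - u n.

Section Space.
Variables (p q r : R) (a b c : Z -> R).

Definition normE_integrand (u : Z -> R) (n : Z) : R :=
  a n * rpow (Rabs (Delta u n)) p + b n * rpow (Rabs (u n)) p.

Definition inE (u : Z -> R) : Prop := summableZ (normE_integrand u).

Definition normE (u : Z -> R) : R := rpow (sumZ (normE_integrand u)) (/ p).

Definition logterm (u : Z -> R) (n : Z) : R :=
  c n * rpow (Rabs (u n)) q * ln (rpow (Rabs (u n)) r).

Definition inD (u : Z -> R) : Prop := inE u /\ summableZ (logterm u).

Definition Ifun (u : Z -> R) : R :=
  / p * rpow (normE u) p
  + r / (q * q) * sumZ (fun n => c n * rpow (Rabs (u n)) q)
  - / q * sumZ (logterm u).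

Definition dI (u v : Z -> R) : R :=
  sumZ (fun n => a n * rpow (Rabs (Delta u n)) (p - 2) * Delta u n * Delta v n
               + b n * rpow (Rabs (u n)) (p - 2) * u n * v n)
  - sumZ (fun n => c n * rpow (Rabs (u n)) (q - 2) * u n * v n
                   * ln (rpow (Rabs (u n)) r)).

Definition dualnorm (u : Z -> R) : Rbar :=
  Lub_Rbar (fun t => exists v, inD v /\ normE v <= 1 /\ t = Rabs (dI u v)).

Definition Cerami_seq (d0 : R) (uk : nat -> Z -> R) : Prop :=
  (forall k, inD (uk k)) /\
  is_lim_seq (fun k => Ifun (uk k)) d0 /\
  (forall eps : R, 0 < eps -> eventually (fun k =>
      Rbar_le (Rbar_mult (dualnorm (uk k)) (1 + normE (uk k))) eps)).
End Space.

Definition cond_C1 (b : Z -> R) : Prop :=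
  (exists b0, 0 < b0 /\ forall n, b0 <= b n) /\
  (forall M : R, exists N : Z, forall n : Z, (N < Z.abs n)%Z -> M < b n).

Definition cond_C2 (c : Z -> R) : Prop :=
  (exists c0, 0 < c0 /\ forall n, c n <= c0) /\ summableZ c.

(* Main.v *)
Require Import Defs.
From Stdlib Require Import Reals ZArith Lra Lia ClassicalEpsilon.
From Coquelicot Require Import Coquelicot.
Require Import Defs.
Open Scope R_scope.

Lemma sum_lim (h : nat -> R) : ex_series h -> is_lim_seq (sum_f_R0 h) (Series h).
Proof. intros H. apply Series_correct in H.
 eapply is_lim_seq_ext. intros n. apply sum_n_Reals. exact H. Qed.

Lemma ex_series_cmp (f g : nat -> R) : (forall n, Rabs (f n) <= g n) -> ex_series g ->
  ex_series (fun n => Rabs (f n)).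
Proof. intros H Hg. apply (@ex_series_le R_AbsRing R_CompleteNormedModule _ g); auto.
 intros n. change (norm (Rabs (f n))) with (Rabs (Rabs (f n))). rewrite Rabs_Rabsolu. apply H. Qed.

Lemma tail_eq (f : nat -> R) N : ex_series f ->
  Series f - sum_f_R0 f N = Series (fun k => f (S N + k)%nat).
Proof. intros H. rewrite (Series_incr_n f (S N)); [simpl; ring|lia|auto]. Qed.

Lemma Series_ge0 (f : nat -> R) : (forall n, 0 <= f n) -> ex_series f -> 0 <= Series f.
Proof. intros H Hf. apply Rle_trans with (Series (fun _ => 0)).
 rewrite Series_ext with (b := fun n => 0 * 0). rewrite Series_scal_l. lra. intros; ring.
 apply Series_le; auto. intros; split; [lra| auto]. Qed.

Lemma sum_f_ge0 (f : nat -> R) N : (forall n, 0 <= f n) -> 0 <= sum_f_R0 f N.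
Proof. intros H; induction N; simpl; auto. specialize (H (S N)); lra. Qed.

Lemma sum_le_Series (f : nat -> R) N : (forall n, 0 <= f n) -> ex_series f -> sum_f_R0 f N <= Series f.
Proof. intros H Hf. pose proof (tail_eq f N Hf).
 assert (0 <= Series (fun k => f (S N + k)%nat)). apply Series_ge0; auto.
 apply ex_series_incr_n; auto. lra. Qed.

Lemma tail_le_Series (f : nat -> R) N : (forall n, 0 <= f n) -> ex_series f ->
  Series (fun k => f (S N + k)%nat) <= Series f.
Proof. intros H Hf. pose proof (tail_eq f N Hf). pose proof (sum_f_ge0 f N H). lra. Qed.

Lemma tail_small (h : nat -> R) : ex_series h -> forall eps, 0 < eps ->
  exists N, forall M, (N <= M)%nat -> Rabs (Series (fun k => h (S M + k)%nat)) < eps.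
Proof. intros H eps He. pose proof (sum_lim h H) as L.
 apply is_lim_seq_spec in L. destruct (L (mkposreal eps He)) as [N HN].
 exists N. intros M HM. rewrite <- tail_eq; auto. rewrite Rabs_minus_sym. apply HN; auto. Qed.

Lemma sum_f_lim (f : nat -> nat -> R) (g : nat -> R) N :
  (forall n, is_lim_seq (fun k => f k n) (g n)) ->
  is_lim_seq (fun k => sum_f_R0 (f k) N) (sum_f_R0 g N).
Proof. intros H. induction N; simpl; auto. apply is_lim_seq_plus'; auto. Qed.

Lemma Series_abs_tail (f : nat -> R) N : ex_series (fun n => Rabs (f n)) ->
  Rabs (Series (fun k => f (S N + k)%nat)) <= Series (fun k => Rabs (f (S N + k)%nat)).
Proof. intros H. apply Series_Rabs. apply (ex_series_incr_n (fun n => Rabs (f n))). auto. Qed.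

Lemma abs3 x y z : Rabs (x + y - z) <= Rabs x + Rabs y + Rabs z.
Proof. unfold Rabs; repeat destruct Rcase_abs; lra. Qed.

Lemma vitali (f : nat -> nat -> R) (g : nat -> R) (A : nat -> nat -> R) (h : nat -> R) (M : R) :
  (forall n, is_lim_seq (fun k => f k n) (g n)) ->
  (forall k n, 0 <= A k n) -> (forall k, ex_series (A k)) -> (forall k, Series (A k) <= M) ->
  (forall n, 0 <= h n) -> ex_series h ->
  (forall d, 0 < d -> exists C, forall k n, Rabs (f k n) <= d * A k n + C * h n) ->
  ex_series (fun n => Rabs (g n)) ->
  is_lim_seq (fun k => Series (f k)) (Series g).
Proof.
  intros Hl HA HAs HAM Hh Hhs Hd Hg.
  assert (Hfs : forall k, ex_series (fun n => Rabs (f k n))).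
  { intros k. destruct (Hd 1 Rlt_0_1) as [C HC].
    apply ex_series_cmp with (g := fun n => 1 * A k n + Rabs C * h n).
    intros n. eapply Rle_trans. apply HC. apply Rplus_le_compat_l.
    apply Rmult_le_compat_r; auto. apply Rle_abs.
    apply (ex_series_plus (V:=R_NormedModule)). apply (ex_series_scal_l (V:=R_NormedModule)). auto.
    apply (ex_series_scal_l (V:=R_NormedModule)). auto. }
  assert (HM0 : 0 <= M). { apply Rle_trans with (Series (A 0%nat)); auto. apply Series_ge0; auto. }
  apply is_lim_seq_spec. intros eps.
  pose (d := eps / (4 * (M + 1))).
  assert (Hdp : 0 < d). { unfold d. apply Rdiv_lt_0_compat. destruct eps; simpl; lra. lra. }
  destruct (Hd d Hdp) as [C HC].
  assert (HC' : forall k n, Rabs (f k n) <= d * A k n + Rabs C * h n).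
  { intros k n. eapply Rle_trans. apply HC. apply Rplus_le_compat_l.
    apply Rmult_le_compat_r; auto. apply Rle_abs. }
  assert (He1 : 0 < eps / (4 * (Rabs C + 1))).
  { apply Rdiv_lt_0_compat. destruct eps; simpl; lra. pose proof (Rabs_pos C); lra. }
  destruct (tail_small h Hhs _ He1) as [N1 HN1].
  assert (He2 : 0 < eps / 4). { destruct eps; simpl; lra. }
  destruct (tail_small _ Hg _ He2) as [N2 HN2].
  set (N := (N1 + N2)%nat).
  pose proof (sum_f_lim f g N Hl) as Hs. apply is_lim_seq_spec in Hs.
  destruct (Hs (mkposreal _ He2)) as [K HK]. exists K. intros k Hk.
  specialize (HK k Hk). simpl in HK.
  assert (Hgs : ex_series g) by (apply ex_series_Rabs; auto).
  assert (Hfks : ex_series (f k)) by (apply ex_series_Rabs; auto).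
  pose proof (tail_eq _ N Hgs) as E1. pose proof (tail_eq _ N Hfks) as E2.
  assert (T1 : Rabs (Series (fun j => g (S N + j)%nat)) < eps / 4).
  { eapply Rle_lt_trans. apply Series_abs_tail; auto.
    rewrite <- (Rabs_right (Series (fun k0 => Rabs (g (S N + k0)%nat)))).
    apply HN2. unfold N; lia. apply Rle_ge. apply Series_ge0. intros; apply Rabs_pos.
    apply (ex_series_incr_n (fun n => Rabs (g n))). auto. }
  assert (T2 : Rabs (Series (fun j => f k (S N + j)%nat)) <= d * M + Rabs C * (eps / (4 * (Rabs C + 1)))).
  { eapply Rle_trans. apply Series_abs_tail; auto.
    assert (EA : ex_series (fun j => A k (S N + j)%nat)) by (apply ex_series_incr_n; auto).
    assert (EH : ex_series (fun j => h (S N + j)%nat)) by (apply ex_series_incr_n; auto).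
    eapply Rle_trans. apply Series_le with (b := fun j => d * A k (S N + j)%nat + Rabs C * h (S N + j)%nat).
    intros; split; [apply Rabs_pos | apply HC'].
    apply (ex_series_plus (V:=R_NormedModule)); apply (ex_series_scal_l (V:=R_NormedModule)); auto.
    rewrite Series_plus, !Series_scal_l.
    apply Rplus_le_compat. apply Rmult_le_compat_l. lra.
    eapply Rle_trans. apply tail_le_Series; auto. auto.
    apply Rmult_le_compat_l. apply Rabs_pos.
    specialize (HN1 N). assert (N1 <= N)%nat by (unfold N; lia). specialize (HN1 H).
    apply Rlt_le. eapply Rle_lt_trans. apply Rle_abs. auto.
    apply (ex_series_scal_l (V:=R_NormedModule)); auto.
    apply (ex_series_scal_l (V:=R_NormedModule)); auto. }
  assert (B1 : d * M <= eps / 4).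
  { apply Rle_trans with (d * (M+1)).
    apply Rmult_le_compat_l. lra. lra. right. unfold d. field. lra. }
  assert (B2 : Rabs C * (eps / (4 * (Rabs C + 1))) <= eps / 4).
  { apply Rle_trans with ((Rabs C + 1) * (eps / (4 * (Rabs C + 1)))).
    apply Rmult_le_compat_r. lra. lra. right. field. pose proof (Rabs_pos C); lra. }
  replace (Series (f k) - Series g) with
    ((sum_f_R0 (f k) N - sum_f_R0 g N) + Series (fun j => f k (S N + j)%nat) - Series (fun j => g (S N + j)%nat)) by lra.
  destruct eps as [e ep]; simpl in *.
  eapply Rle_lt_trans; [apply abs3|]. simpl in *. lra.
Qed.

Lemma strong_conv (F : nat -> nat -> R) (Fw : nat -> R) (D : nat -> nat -> R) (K : R) :
  0 < K ->
  (forall k n, 0 <= F k n) -> (forall n, 0 <= Fw n) -> (forall k n, 0 <= D k n) ->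
  (forall k, ex_series (F k)) -> ex_series Fw ->
  (forall k n, D k n <= K * (F k n + Fw n)) ->
  (forall n, is_lim_seq (fun k => D k n) 0) ->
  (forall n, is_lim_seq (fun k => F k n) (Fw n)) ->
  is_lim_seq (fun k => Series (F k)) (Series Fw) ->
  is_lim_seq (fun k => Series (D k)) 0.
Proof.
  intros HK HF HFw HD HFs HFws HDK HDl HFl HS.
  assert (HDs : forall k, ex_series (D k)).
  { intros k. apply ex_series_Rabs. apply ex_series_cmp with (g := fun n => K * (F k n + Fw n)).
    intros n. rewrite Rabs_right. auto. apply Rle_ge; auto.
    apply (ex_series_scal_l (V:=R_NormedModule)). apply (ex_series_plus (V:=R_NormedModule)); auto. }
  apply is_lim_seq_spec. intros [e ep]. simpl.
  assert (He1 : 0 < e / (8 * K)). { apply Rdiv_lt_0_compat; lra. }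
  destruct (tail_small Fw HFws _ He1) as [N HN]. specialize (HN N (le_n _)).
  pose proof (tail_eq Fw N HFws) as Ew.
  assert (L1 : is_lim_seq (fun k => sum_f_R0 (D k) N) 0).
  { replace 0 with (sum_f_R0 (fun _ => 0) N). apply sum_f_lim; auto.
    clear; induction N; simpl; auto; lra. }
  assert (L2 : is_lim_seq (fun k => Series (F k) - sum_f_R0 (F k) N) (Series Fw - sum_f_R0 Fw N)).
  { apply is_lim_seq_minus'; auto. apply sum_f_lim; auto. }
  apply is_lim_seq_spec in L1. apply is_lim_seq_spec in L2.
  assert (He2 : 0 < e / 4) by lra.
  destruct (L1 (mkposreal _ He2)) as [K1 HK1]. destruct (L2 (mkposreal _ He1)) as [K2 HK2].
  exists (K1 + K2)%nat. intros k Hk. simpl in *.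
  specialize (HK1 k ltac:(lia)). specialize (HK2 k ltac:(lia)).
  pose proof (tail_eq (F k) N (HFs k)) as Ek. pose proof (tail_eq (D k) N (HDs k)) as Ed.
  assert (Tb : Series (fun j => D k (S N + j)%nat) <= K * (Series (fun j => F k (S N + j)%nat) + Series (fun j => Fw (S N + j)%nat))).
  { assert (E1 : ex_series (fun j => F k (S N + j)%nat)) by (apply ex_series_incr_n; auto).
    assert (E2 : ex_series (fun j => Fw (S N + j)%nat)) by (apply ex_series_incr_n; auto).
    rewrite <- Series_plus, <- Series_scal_l; auto.
    apply Series_le. intros; split; auto.
    apply (ex_series_scal_l (V:=R_NormedModule)). apply (ex_series_plus (V:=R_NormedModule)); auto. }
  assert (P0 : 0 <= Series (D k)) by (apply Series_ge0; auto).
  rewrite Rminus_0_r in HK1. rewrite Rminus_0_r. rewrite Rabs_right by lra.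
  rewrite Rabs_right in HN.
  2:{ apply Rle_ge, Series_ge0; auto. apply (proj1 (ex_series_incr_n Fw (S N))); auto. }
  assert (Hx : Series (fun j => F k (S N + j)%nat) < Series (fun j => Fw (S N + j)%nat) + e / (8*K)).
  { simpl in *. rewrite <- Ek, <- Ew. apply Rabs_def2 in HK2. lra. }
  assert (K * (Series (fun j => F k (S N + j)%nat) + Series (fun j => Fw (S N + j)%nat)) <= K * (3 * (e / (8 * K)))).
  { apply Rmult_le_compat_l. lra. simpl in *. lra. }
  assert (K * (3 * (e / (8 * K))) = 3 * e / 8) by (field; lra).
  apply Rabs_def2 in HK1. simpl in *. lra.
Qed.


Lemma sZ_pos f : summableZ f -> ex_series (posZ f).
Proof. intros [H _]. apply ex_series_Rabs; auto. Qed.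
Lemma sZ_neg f : summableZ f -> ex_series (negZ f).
Proof. intros [_ H]. apply ex_series_Rabs; auto. Qed.

Lemma summableZ_le (f g : Z -> R) : (forall n, Rabs (f n) <= g n) -> summableZ g -> summableZ f.
Proof. intros H [H1 H2]. split.
 - apply ex_series_cmp with (g := fun n => Rabs (posZ g n)); auto. intros n; unfold posZ.
   eapply Rle_trans. apply H. apply Rle_abs.
 - apply ex_series_cmp with (g := fun n => Rabs (negZ g n)); auto. intros n; unfold negZ.
   eapply Rle_trans. apply H. apply Rle_abs. Qed.

Lemma summableZ_lin (f g : Z -> R) al be : summableZ f -> summableZ g ->
  summableZ (fun n => al * f n + be * g n).
Proof. intros [F1 F2] [G1 G2]. split.
 - apply ex_series_cmp with (g := fun n => Rabs al * Rabs (posZ f n) + Rabs be * Rabs (posZ g n)).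
   intros n; unfold posZ. eapply Rle_trans. apply Rabs_triang. rewrite !Rabs_mult. lra.
   apply (ex_series_plus (V:=R_NormedModule)); apply (ex_series_scal_l (V:=R_NormedModule)); auto.
 - apply ex_series_cmp with (g := fun n => Rabs al * Rabs (negZ f n) + Rabs be * Rabs (negZ g n)).
   intros n; unfold negZ. eapply Rle_trans. apply Rabs_triang. rewrite !Rabs_mult. lra.
   apply (ex_series_plus (V:=R_NormedModule)); apply (ex_series_scal_l (V:=R_NormedModule)); auto.
Qed.

Lemma summableZ_abs f : summableZ f -> summableZ (fun n => Rabs (f n)).
Proof. intros H. destruct H as [H1 H2]; split.
 eapply ex_series_ext; [|apply H1]. intros n; unfold posZ; simpl; rewrite Rabs_Rabsolu; auto.
 eapply ex_series_ext; [|apply H2]. intros n; unfold negZ; simpl; rewrite Rabs_Rabsolu; auto. Qed.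

Lemma sumZ_ext f g : (forall n, f n = g n) -> sumZ f = sumZ g.
Proof. intros H. unfold sumZ. f_equal; apply Series_ext; intros; unfold posZ, negZ; auto. Qed.

Lemma sumZ_scal f t : sumZ (fun n => t * f n) = t * sumZ f.
Proof. unfold sumZ, posZ, negZ. rewrite !Series_scal_l. ring. Qed.

Lemma sumZ_lin (f g : Z -> R) al be : summableZ f -> summableZ g ->
  sumZ (fun n => al * f n + be * g n) = al * sumZ f + be * sumZ g.
Proof. intros Hf Hg. unfold sumZ.
 pose proof (sZ_pos f Hf). pose proof (sZ_pos g Hg). pose proof (sZ_neg f Hf). pose proof (sZ_neg g Hg).
 unfold posZ, negZ in *.
 rewrite (Series_plus (fun n => al * f (Z.of_nat n)) (fun n => be * g (Z.of_nat n))).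
 rewrite (Series_plus (fun n => al * f (- Z.of_nat n - 1)%Z) (fun n => be * g (- Z.of_nat n - 1)%Z)).
 rewrite !Series_scal_l. ring.
 all: apply (ex_series_scal_l (V:=R_NormedModule)); auto.
Qed.

Lemma sumZ_minus (f g : Z -> R) : summableZ f -> summableZ g ->
  sumZ (fun n => f n - g n) = sumZ f - sumZ g.
Proof. intros. rewrite <- (sumZ_ext (fun n => 1 * f n + (-1) * g n)). rewrite sumZ_lin; auto. ring.
 intros; ring. Qed.

Lemma sumZ_ge0 f : (forall n, 0 <= f n) -> summableZ f -> 0 <= sumZ f.
Proof. intros H Hf. unfold sumZ. pose proof (Series_ge0 (posZ f) (fun n => H _) (sZ_pos f Hf)).
 pose proof (Series_ge0 (negZ f) (fun n => H _) (sZ_neg f Hf)). lra. Qed.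

Lemma sumZ_le f g : (forall n, f n <= g n) -> summableZ f -> summableZ g -> sumZ f <= sumZ g.
Proof. intros H Hf Hg. assert (0 <= sumZ (fun n => g n - f n)).
 apply sumZ_ge0. intros n; specialize (H n); lra.
 apply summableZ_le with (g := fun n => Rabs (g n) + Rabs (f n)). intros n. unfold Rabs; repeat destruct Rcase_abs; lra.
 apply summableZ_le with (g := fun n => 1 * Rabs (g n) + 1 * Rabs (f n)). intros n. rewrite Rabs_right. lra.
 pose proof (Rabs_pos (g n)); pose proof (Rabs_pos (f n)); lra.
 apply summableZ_lin; apply summableZ_abs; auto.
 rewrite sumZ_minus in H0; auto. lra. Qed.

Lemma term_le_sum (f : nat -> R) j : (forall n, 0 <= f n) -> f j <= sum_f_R0 f j.
Proof. intros H. destruct j; simpl. lra. pose proof (sum_f_ge0 f j H). lra. Qed.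

Lemma term_le_sumZ g n : (forall n, 0 <= g n) -> summableZ g -> g n <= sumZ g.
Proof. intros H Hg. unfold sumZ.
 pose proof (Series_ge0 (posZ g) (fun n => H _) (sZ_pos g Hg)).
 pose proof (Series_ge0 (negZ g) (fun n => H _) (sZ_neg g Hg)).
 destruct (Z_le_gt_dec 0 n).
 - pose proof (sum_le_Series (posZ g) (Z.to_nat n) (fun n => H _) (sZ_pos g Hg)).
   pose proof (term_le_sum (posZ g) (Z.to_nat n) (fun n => H _)).
   unfold posZ at 1 in H3. rewrite Z2Nat.id in H3; auto. lra.
 - pose proof (sum_le_Series (negZ g) (Z.to_nat (- n - 1)) (fun n => H _) (sZ_neg g Hg)).
   pose proof (term_le_sum (negZ g) (Z.to_nat (- n - 1)) (fun n => H _)).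
   unfold negZ at 1 in H3. rewrite Z2Nat.id in H3 by lia.
   replace (- (- n - 1) - 1)%Z with n in H3 by ring. lra.
Qed.

Lemma vitaliZ (f : nat -> Z -> R) (g : Z -> R) (A : nat -> Z -> R) (h : Z -> R) (M : R) :
  (forall n, is_lim_seq (fun k => f k n) (g n)) ->
  (forall k n, 0 <= A k n) -> (forall k, summableZ (A k)) -> (forall k, sumZ (A k) <= M) ->
  (forall n, 0 <= h n) -> summableZ h ->
  (forall d, 0 < d -> exists C, forall k n, Rabs (f k n) <= d * A k n + C * h n) ->
  summableZ g ->
  is_lim_seq (fun k => sumZ (f k)) (sumZ g).
Proof.
  intros Hl HA HAs HAM Hh Hhs Hd [Hg1 Hg2].
  unfold sumZ. apply is_lim_seq_plus'.
  - apply (vitali (fun k => posZ (f k)) (posZ g) (fun k => posZ (A k)) (posZ h) M); auto.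
    + intros; apply Hl.
    + intros; apply HA.
    + intros; apply sZ_pos; auto.
    + intros k. specialize (HAM k). unfold sumZ in HAM.
      pose proof (Series_ge0 (negZ (A k)) (fun n => HA _ _) (sZ_neg _ (HAs k))). lra.
    + intros; apply Hh.
    + apply sZ_pos; auto.
    + intros d Hd0. destruct (Hd d Hd0) as [C HC]. exists C. intros; apply HC.
  - apply (vitali (fun k => negZ (f k)) (negZ g) (fun k => negZ (A k)) (negZ h) M); auto.
    + intros; apply Hl.
    + intros; apply HA.
    + intros; apply sZ_neg; auto.
    + intros k. specialize (HAM k). unfold sumZ in HAM.
      pose proof (Series_ge0 (posZ (A k)) (fun n => HA _ _) (sZ_pos _ (HAs k))). lra.
    + intros; apply Hh.
    + apply sZ_neg; auto.
    + intros d Hd0. destruct (Hd d Hd0) as [C HC]. exists C. intros; apply HC.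
Qed.

Definition fold (f : Z -> R) (n : nat) : R := posZ f n + negZ f n.

Lemma sumZ_fold f : summableZ f -> sumZ f = Series (fold f) /\ ex_series (fold f).
Proof. intros Hf. unfold fold, sumZ. split. rewrite Series_plus; auto. apply sZ_pos; auto. apply sZ_neg; auto.
 apply (ex_series_plus (V:=R_NormedModule)). apply sZ_pos; auto. apply sZ_neg; auto. Qed.

Lemma strongZ (F : nat -> Z -> R) (Fw : Z -> R) (D : nat -> Z -> R) (K : R) :
  0 < K ->
  (forall k n, 0 <= F k n) -> (forall n, 0 <= Fw n) -> (forall k n, 0 <= D k n) ->
  (forall k, summableZ (F k)) -> summableZ Fw -> (forall k, summableZ (D k)) ->
  (forall k n, D k n <= K * (F k n + Fw n)) ->
  (forall n, is_lim_seq (fun k => D k n) 0) ->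
  (forall n, is_lim_seq (fun k => F k n) (Fw n)) ->
  is_lim_seq (fun k => sumZ (F k)) (sumZ Fw) ->
  is_lim_seq (fun k => sumZ (D k)) 0.
Proof.
  intros HK HF HFw HD HFs HFws HDs HDK HDl HFl HS.
  eapply is_lim_seq_ext. intros k. symmetry. apply (proj1 (sumZ_fold _ (HDs k))).
  apply (strong_conv (fun k => fold (F k)) (fold Fw) (fun k => fold (D k)) K); auto.
  - intros; unfold fold, posZ, negZ. pose proof (HF k (Z.of_nat n)). pose proof (HF k (- Z.of_nat n - 1)%Z). lra.
  - intros; unfold fold, posZ, negZ. pose proof (HFw (Z.of_nat n)). pose proof (HFw (- Z.of_nat n - 1)%Z). lra.
  - intros; unfold fold, posZ, negZ. pose proof (HD k (Z.of_nat n)). pose proof (HD k (- Z.of_nat n - 1)%Z). lra.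
  - intros; apply sumZ_fold; auto.
  - apply sumZ_fold; auto.
  - intros; unfold fold, posZ, negZ. pose proof (HDK k (Z.of_nat n)). pose proof (HDK k (- Z.of_nat n - 1)%Z). lra.
  - intros; unfold fold, posZ, negZ. replace (Finite 0) with (Rbar_plus 0 0) by (simpl; f_equal; ring).
    apply is_lim_seq_plus'; auto.
  - intros; unfold fold, posZ, negZ. apply is_lim_seq_plus'; auto.
  - eapply is_lim_seq_ext. intros k. apply (proj1 (sumZ_fold _ (HFs k))).
    rewrite <- (proj1 (sumZ_fold _ HFws)). auto.
Qed.


Definition SI (phi : nat -> nat) := forall k, (phi k < phi (S k))%nat.

Lemma SI_ge phi : SI phi -> forall k, (k <= phi k)%nat.
Proof. intros H k; induction k. lia. specialize (H k). lia. Qed.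

Lemma SI_mono phi : SI phi -> forall k k', (k <= k')%nat -> (phi k <= phi k')%nat.
Proof. intros H k k' Hk; induction Hk. lia. specialize (H m). lia. Qed.

Lemma SI_comp phi psi : SI phi -> SI psi -> SI (fun k => phi (psi k)).
Proof. intros H1 H2 k. specialize (H2 k). pose proof (SI_mono phi H1 (S (psi k)) (psi (S k)) H2).
 specialize (H1 (psi k)). lia. Qed.

Lemma near_L (x : nat -> R) B : (forall k, Rabs (x k) <= B) ->
  exists L, forall eps, 0 < eps -> forall N, exists n, (N <= n)%nat /\ Rabs (x n - L) < eps.
Proof. intros HB. destruct (ex_LimSup_seq x) as [l Hl]. destruct l as [L| |].
 - exists L. intros eps He N. destruct (Hl (mkposreal eps He)) as [H1 [N2 H2]].
   destruct (H1 (N + N2)%nat) as [n [Hn Hx]]. exists n. split. lia.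
   specialize (H2 n ltac:(lia)). simpl in *. apply Rabs_def1; lra.
 - destruct (Hl B 0%nat) as [n [_ Hn]]. specialize (HB n). apply Rabs_le_between in HB. lra.
 - destruct (Hl (-B)) as [N HN]. specialize (HN N (le_n _)). specialize (HB N).
   apply Rabs_le_between in HB. lra.
Qed.

Fixpoint build (pick : nat -> nat -> nat) (j : nat) : nat :=
  match j with O => pick O O | S j' => pick j (S (build pick j')) end.

Lemma bw (x : nat -> R) B : (forall k, Rabs (x k) <= B) ->
  exists phi (L : R), SI phi /\ is_lim_seq (fun k => x (phi k)) L.
Proof. intros HB. destruct (near_L x B HB) as [L HL].
 set (pick := fun j N => epsilon (inhabits O) (fun n => (N <= n)%nat /\ Rabs (x n - L) < / INR (S j))).
 assert (Hp : forall j N, (N <= pick j N)%nat /\ Rabs (x (pick j N) - L) < / INR (S j)).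
 { intros j N. unfold pick. apply epsilon_spec. apply HL. apply Rinv_0_lt_compat. apply lt_0_INR. lia. }
 exists (build pick), L. split.
 - intros k. simpl. destruct (Hp (S k) (S (build pick k))). lia.
 - apply is_lim_seq_spec. intros eps. destruct (archimed_cor1 eps (cond_pos eps)) as [N [HN1 HN2]].
   exists N. intros k Hk.
   assert (Hx : Rabs (x (build pick k) - L) < / INR (S k)).
   { destruct k; simpl; apply Hp. }
   eapply Rlt_trans. apply Hx. eapply Rle_lt_trans; [|apply HN1].
   apply Rinv_le_contravar. apply lt_0_INR; lia. apply le_INR; lia.
Qed.

Lemma lim_sub (y z : nat -> R) (L : R) j : is_lim_seq y L ->
  (forall k, (j <= k)%nat -> exists i, (k <= i)%nat /\ z k = y i) -> is_lim_seq z L.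
Proof. intros Hy Hz. apply is_lim_seq_spec in Hy. simpl in Hy. apply is_lim_seq_spec. simpl. intros eps.
 destruct (Hy eps) as [N HN]. exists (N + j)%nat. intros k Hk.
 destruct (Hz k ltac:(lia)) as [i [Hi Hi']]. rewrite Hi'. apply HN. lia. Qed.

Lemma bw2 (x y : nat -> R) B : (forall k, Rabs (x k) <= B) -> (forall k, Rabs (y k) <= B) ->
  exists phi, SI phi /\ (exists L : R, is_lim_seq (fun k => x (phi k)) L) /\ (exists L : R, is_lim_seq (fun k => y (phi k)) L).
Proof. intros Hx Hy. destruct (bw x B Hx) as [phi1 [L1 [H1 H1']]].
 destruct (bw (fun k => y (phi1 k)) B (fun k => Hy _)) as [phi2 [L2 [H2 H2']]].
 exists (fun k => phi1 (phi2 k)). split. apply SI_comp; auto. split.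
 exists L1. apply (lim_sub _ _ L1 O H1'). intros k _. exists (phi2 k). split; auto. apply SI_ge; auto.
 exists L2. auto. Qed.

Definition prop_sel (u : nat -> Z -> R) (psi : nat -> nat) (j : nat) (phi : nat -> nat) : Prop :=
  SI phi /\ (exists L : R, is_lim_seq (fun k => u (psi (phi k)) (Z.of_nat j)) L) /\
  (exists L : R, is_lim_seq (fun k => u (psi (phi k)) (- Z.of_nat j - 1)%Z) L).

Definition sel (u : nat -> Z -> R) (psi : nat -> nat) (j : nat) : nat -> nat :=
  epsilon (inhabits (fun k => k)) (prop_sel u psi j).

Fixpoint Psi (u : nat -> Z -> R) (j : nat) : nat -> nat :=
  match j with
  | O => sel u (fun k => k) O
  | S j' => fun k => Psi u j' (sel u (Psi u j') j k)
  end.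

Lemma diagonal (u : nat -> Z -> R) B : (forall k n, Rabs (u k n) <= B) ->
  exists phi (w : Z -> R), SI phi /\ forall n, is_lim_seq (fun k => u (phi k) n) (w n).
Proof.
  intros HB.
  assert (Hsel : forall psi j, prop_sel u psi j (sel u psi j)).
  { intros psi j. unfold sel. apply epsilon_spec. unfold prop_sel.
    apply (bw2 (fun k => u (psi k) (Z.of_nat j)) (fun k => u (psi k) (- Z.of_nat j - 1)%Z) B); intros; apply HB. }
  assert (HSI : forall j, SI (Psi u j)).
  { induction j; simpl. apply Hsel. apply SI_comp; auto. apply Hsel. }
  assert (Hconv : forall j, (exists L : R, is_lim_seq (fun k => u (Psi u j k) (Z.of_nat j)) L) /\
                           (exists L : R, is_lim_seq (fun k => u (Psi u j k) (- Z.of_nat j - 1)%Z) L)).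
  { intros j; destruct j. apply (Hsel (fun k => k) O). apply (Hsel (Psi u j) (S j)). }
  assert (Hrel : forall j d k, exists i, (k <= i)%nat /\ Psi u (d + j) k = Psi u j i).
  { intros j d; induction d; intros k. exists k; split; auto.
    simpl. destruct (IHd (sel u (Psi u (d + j)) (S (d + j)) k)) as [i [Hi Hi']].
    exists i. split; auto. pose proof (SI_ge _ (proj1 (Hsel (Psi u (d + j)) (S (d + j)))) k). lia. }
  set (phi := fun k => Psi u k k).
  assert (Hphi : SI phi).
  { intros k. unfold phi. simpl.
    pose proof (SI_ge _ (proj1 (Hsel (Psi u k) (S k))) (S k)).
    pose proof (SI_mono _ (HSI k) _ _ H). pose proof (HSI k k). lia. }
  assert (Hex : forall n, exists L : R, is_lim_seq (fun k => u (phi k) n) L).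
  { intros n.
    assert (Hj : forall j, (exists L : R, is_lim_seq (fun k => u (Psi u j k) n) L) ->
                 exists L : R, is_lim_seq (fun k => u (phi k) n) L).
    { intros j [L HL]. exists L. apply (lim_sub _ _ L j HL). intros k Hk.
      destruct (Hrel j (k - j)%nat k) as [i [Hi Hi']]. exists i. split; auto.
      unfold phi. replace (k - j + j)%nat with k in Hi' by lia. rewrite Hi'. auto. }
    destruct (Z_le_gt_dec 0 n).
    - apply (Hj (Z.to_nat n)). destruct (Hconv (Z.to_nat n)) as [[L HL] _].
      rewrite Z2Nat.id in HL by auto. eauto.
    - apply (Hj (Z.to_nat (- n - 1))). destruct (Hconv (Z.to_nat (- n - 1))) as [_ [L HL]].
      rewrite Z2Nat.id in HL by lia. replace (- (- n - 1) - 1)%Z with n in HL by ring. eauto. }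
  exists phi, (fun n => real (Lim_seq (fun k => u (phi k) n))). split; auto.
  intros n. destruct (Hex n) as [L HL]. rewrite (is_lim_seq_unique _ _ HL). simpl. auto.
Qed.


Lemma rpow_ge0 x y : 0 <= rpow x y.
Proof. unfold rpow. destruct Rle_dec. lra. unfold Rpower. left; apply exp_pos. Qed.

Lemma rpow_pos x y : 0 < x -> rpow x y = Rpower x y.
Proof. intros H. unfold rpow. destruct Rle_dec; auto. lra. Qed.

Lemma rpow_0 y : rpow (Rabs 0) y = 0.
Proof. unfold rpow. destruct Rle_dec; auto. rewrite Rabs_R0 in n. lra. Qed.

Lemma even_pow_abs x m : (Rabs x) ^ (2 * m) = x ^ (2 * m).
Proof. rewrite !pow_mult. f_equal. apply pow2_abs. Qed.

Lemma even_pow_ge0 x m : 0 <= x ^ (2 * m).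
Proof. rewrite <- even_pow_abs. apply pow_le. apply Rabs_pos. Qed.

Lemma rpow_p (m : nat) x : (0 < m)%nat -> rpow (Rabs x) (INR (2 * m)) = x ^ (2 * m).
Proof. intros Hm. destruct (Req_dec x 0) as [->|Hx].
 - rewrite rpow_0. rewrite pow_i. auto. lia.
 - rewrite rpow_pos. rewrite Rpower_pow. apply even_pow_abs. apply Rabs_pos_lt; auto.
   apply Rabs_pos_lt; auto. Qed.

Lemma rpow_p2 (m : nat) x : (0 < m)%nat ->
  rpow (Rabs x) (INR (2 * m) - 2) * x = x ^ (2 * m - 1).
Proof. intros Hm. destruct (Req_dec x 0) as [->|Hx].
 - rewrite Rmult_0_r. rewrite pow_i. auto. lia.
 - rewrite rpow_pos by (apply Rabs_pos_lt; auto).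
   replace (INR (2 * m) - 2) with (INR (2 * (m - 1))).
   rewrite Rpower_pow by (apply Rabs_pos_lt; auto). rewrite even_pow_abs.
   replace (2 * m - 1)%nat with (S (2 * (m - 1))) by lia. simpl. ring.
   replace (2 * m)%nat with (2 * (m - 1) + 2)%nat by lia. rewrite plus_INR. simpl. ring. Qed.

Lemma pow_split x n : (0 < n)%nat -> x ^ (n - 1) * x = x ^ n.
Proof. intros Hn. replace n with (S (n - 1)) at 2 by lia. simpl. ring. Qed.

Lemma young (s t d : R) (n : nat) : 0 < d -> (0 < n)%nat ->
  Rabs s ^ (n - 1) * Rabs t <= d * Rabs s ^ n + (/ d) ^ (n - 1) * Rabs t ^ n.
Proof. intros Hd Hn. set (x := Rabs s). set (y := Rabs t).
 assert (Hx : 0 <= x) by apply Rabs_pos. assert (Hy : 0 <= y) by apply Rabs_pos.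
 assert (P1 : 0 <= (/ d) ^ (n - 1) * y ^ n). { apply Rmult_le_pos; apply pow_le; auto. left; apply Rinv_0_lt_compat; auto. }
 assert (P2 : 0 <= d * x ^ n). { apply Rmult_le_pos. lra. apply pow_le; auto. }
 destruct (Rle_dec y (d * x)).
 - apply Rle_trans with (x ^ (n - 1) * (d * x)). apply Rmult_le_compat_l. apply pow_le; auto. auto.
   rewrite <- (pow_split x n Hn). lra.
 - assert (x <= y / d). { apply Rmult_le_reg_r with d; auto. unfold Rdiv. rewrite Rmult_assoc, Rinv_l; lra. }
   apply Rle_trans with ((y / d) ^ (n - 1) * y). apply Rmult_le_compat_r; auto. apply pow_incr; auto.
   unfold Rdiv. rewrite Rpow_mult_distr. rewrite <- (pow_split y n Hn). lra.
Qed.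

Lemma convex_pow (s t : R) (n : nat) : Rabs (s - t) ^ n <= 2 ^ n * (Rabs s ^ n + Rabs t ^ n).
Proof. assert (Rabs (s - t) <= 2 * Rmax (Rabs s) (Rabs t)).
 { unfold Rminus. eapply Rle_trans. apply Rabs_triang. rewrite Rabs_Ropp.
   pose proof (Rmax_l (Rabs s) (Rabs t)). pose proof (Rmax_r (Rabs s) (Rabs t)). lra. }
 apply Rle_trans with ((2 * Rmax (Rabs s) (Rabs t)) ^ n). apply pow_incr. split; auto. apply Rabs_pos.
 rewrite Rpow_mult_distr. apply Rmult_le_compat_l. apply pow_le; lra.
 pose proof (pow_le (Rabs s) n (Rabs_pos _)). pose proof (pow_le (Rabs t) n (Rabs_pos _)).
 unfold Rmax; destruct Rle_dec; lra. Qed.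

Lemma lim_pow (x : nat -> R) (l : R) n : is_lim_seq x l -> is_lim_seq (fun k => x k ^ n) (l ^ n).
Proof. intros H. induction n; simpl. apply is_lim_seq_const. apply is_lim_seq_mult'; auto. Qed.

Lemma abs_le_pow (x : R) (n : nat) : (0 < n)%nat -> Rabs x <= 1 + Rabs x ^ n.
Proof. intros Hn. destruct (Rle_dec (Rabs x) 1).
 pose proof (pow_le (Rabs x) n (Rabs_pos _)). lra.
 replace n with (S (n - 1)) by lia. simpl. pose proof (pow_R1_Rle (Rabs x) (n - 1) ltac:(lra)).
 assert (Rabs x * 1 <= Rabs x * Rabs x ^ (n - 1)). apply Rmult_le_compat_l. apply Rabs_pos. auto. lra. Qed.

Lemma ln_le_id y : 0 < y -> ln y <= y - 1.
Proof. intros H. pose proof (exp_ineq1_le (ln y)). rewrite exp_ln in H0; auto. lra. Qed.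

Lemma ylny y : 0 < y -> y <= 1 -> y * Rabs (ln y) <= 1.
Proof. intros H1 H2. assert (ln y <= 0). { rewrite <- ln_1. apply ln_le; lra. }
 rewrite Rabs_left1 by auto. pose proof (ln_le_id (/ y) (Rinv_0_lt_compat _ H1)).
 rewrite ln_Rinv in H0 by auto. assert (y * - ln y <= y * (/ y - 1)). apply Rmult_le_compat_l; lra.
 rewrite Rmult_minus_distr_l, Rinv_r in H3 by lra. lra. Qed.

Lemma exp_le x y : x <= y -> exp x <= exp y.
Proof. intros [H|H]. left; apply exp_increasing; auto. subst; lra. Qed.

Lemma Rpower_le1 y s : 0 < y -> y <= 1 -> 0 <= s -> Rpower y s <= 1.
Proof. intros H1 H2 H3. unfold Rpower. rewrite <- exp_0. apply exp_le.
 assert (ln y <= 0). { rewrite <- ln_1. apply ln_le; lra. } nra. Qed.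

Lemma Rpower_le_base y s : 0 < y -> y <= 1 -> 1 <= s -> Rpower y s <= y.
Proof. intros H1 H2 H3. replace s with ((s - 1) + 1) by ring. rewrite Rpower_plus, Rpower_1 by auto.
 pose proof (Rpower_le1 y (s - 1) H1 H2 ltac:(lra)). nra. Qed.

Lemma Rpower_pos y s : 0 < Rpower y s.
Proof. apply exp_pos. Qed.

Lemma pw_ln_bound s y B : 1 <= s -> 0 < y -> y <= B ->
  Rpower y s * Rabs (ln y) <= 1 + Rpower B s * B.
Proof. intros Hs Hy HB. assert (0 <= Rpower B s * B).
 { apply Rmult_le_pos. left; apply Rpower_pos. lra. }
 destruct (Rle_dec y 1).
 - pose proof (Rpower_le_base y s Hy r Hs). pose proof (ylny y Hy r).
   pose proof (Rabs_pos (ln y)). assert (Rpower y s * Rabs (ln y) <= y * Rabs (ln y)).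
   apply Rmult_le_compat_r; auto. lra.
 - assert (0 <= ln y). { rewrite <- ln_1. apply ln_le; lra. }
   rewrite Rabs_right by lra. pose proof (ln_le_id y Hy).
   assert (Rpower y s <= Rpower B s). apply Rle_Rpower_l; lra.
   assert (Rpower y s * ln y <= Rpower B s * B). apply Rmult_le_compat; try lra. left; apply Rpower_pos.
   lra. Qed.

Lemma small_bound q y : 2 <= q -> 0 < y -> y <= 1 -> Rpower y q * Rabs (ln y) <= y.
Proof. intros Hq Hy H1. replace q with ((q - 1) + 1) by ring. rewrite Rpower_plus, Rpower_1 by auto.
 pose proof (Rpower_le_base y (q - 1) Hy H1 ltac:(lra)). pose proof (ylny y Hy H1).
 pose proof (Rabs_pos (ln y)). pose proof (Rpower_pos y (q - 1)).
 assert (Rpower y (q - 1) * y * Rabs (ln y) <= y * (y * Rabs (ln y))).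
 { rewrite Rmult_assoc. apply Rmult_le_compat_r. nra. auto. }
 nra. Qed.

Definition Gq (q r x : R) : R := rpow (Rabs x) q * ln (rpow (Rabs x) r).
Definition gq (q r x y : R) : R := rpow (Rabs x) (q - 2) * x * y * ln (rpow (Rabs x) r).

Lemma Gq_nz q r x : x <> 0 -> Gq q r x = Rpower (Rabs x) q * (r * ln (Rabs x)).
Proof. intros H. unfold Gq. rewrite !rpow_pos by (apply Rabs_pos_lt; auto). rewrite ln_Rpower. auto. Qed.

Lemma gq_nz q r x y : x <> 0 -> gq q r x y = Rpower (Rabs x) (q - 2) * x * y * (r * ln (Rabs x)).
Proof. intros H. unfold gq. rewrite !rpow_pos by (apply Rabs_pos_lt; auto). rewrite ln_Rpower. auto. Qed.

Lemma gq_diag q r x : gq q r x x = Gq q r x.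
Proof. destruct (Req_dec x 0) as [->|H]. unfold gq, Gq. rewrite !rpow_0. ring.
 rewrite gq_nz, Gq_nz by auto. replace q with ((q - 2) + 2) at 2 by ring.
 rewrite Rpower_plus.
 assert (E : Rpower (Rabs x) 2 = x * x).
 { replace 2 with (INR 2) by (simpl; ring). rewrite Rpower_pow; [|apply Rabs_pos_lt; auto]. rewrite pow2_abs. ring. }
 rewrite E. ring. Qed.

Lemma Gq_bound q r B x : 2 <= q -> 0 <= r -> 1 <= B -> Rabs x <= B ->
  Rabs (Gq q r x) <= r * (1 + Rpower B q * B).
Proof. intros Hq Hr HB Hx. assert (0 <= 1 + Rpower B q * B).
 { pose proof (Rpower_pos B q). nra. }
 destruct (Req_dec x 0) as [->|Hx0]. unfold Gq; rewrite rpow_0, Rmult_0_l, Rabs_R0. nra.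
 rewrite Gq_nz by auto. rewrite Rabs_mult, Rabs_mult, (Rabs_right (Rpower _ _)), (Rabs_right r) by (try lra; left; apply Rpower_pos).
 pose proof (pw_ln_bound q (Rabs x) B ltac:(lra) (Rabs_pos_lt _ Hx0) Hx). nra. Qed.

Lemma Gq_small q r x : 2 <= q -> 0 <= r -> Rabs x <= 1 -> Rabs (Gq q r x) <= r * Rabs x.
Proof. intros Hq Hr Hx. destruct (Req_dec x 0) as [->|Hx0]. unfold Gq; rewrite rpow_0, Rmult_0_l, !Rabs_R0. lra.
 rewrite Gq_nz by auto. rewrite Rabs_mult, Rabs_mult, (Rabs_right (Rpower _ _)), (Rabs_right r) by (try lra; left; apply Rpower_pos).
 pose proof (small_bound q (Rabs x) Hq (Rabs_pos_lt _ Hx0) Hx). nra. Qed.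

Lemma gq_bound q r B x y : 2 <= q -> 0 <= r -> 1 <= B -> Rabs x <= B -> Rabs y <= B ->
  Rabs (gq q r x y) <= r * (1 + Rpower B (q - 1) * B) * B.
Proof. intros Hq Hr HB Hx Hy. assert (0 <= 1 + Rpower B (q - 1) * B).
 { pose proof (Rpower_pos B (q - 1)). nra. }
 destruct (Req_dec x 0) as [->|Hx0]. unfold gq; rewrite rpow_0, !Rmult_0_l, Rabs_R0. apply Rmult_le_pos; [apply Rmult_le_pos|]; lra.
 rewrite gq_nz by auto.
 assert (E : Rpower (Rabs x) (q - 2) * x * y * (r * ln (Rabs x)) =
             (Rpower (Rabs x) (q - 2) * Rabs x) * (x / Rabs x) * y * r * ln (Rabs x)).
 { field. apply Rabs_no_R0; auto. }
 rewrite E. clear E. replace (Rpower (Rabs x) (q - 2) * Rabs x) with (Rpower (Rabs x) (q - 1)).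
 2:{ replace (q - 1) with ((q - 2) + 1) by ring. rewrite Rpower_plus, Rpower_1; auto. apply Rabs_pos_lt; auto. }
 assert (Hxx : Rabs (x / Rabs x) = 1). { unfold Rdiv. rewrite Rabs_mult, Rabs_inv, Rabs_Rabsolu. field. apply Rabs_no_R0; auto. }
 rewrite !Rabs_mult, Hxx, (Rabs_right (Rpower _ _)), (Rabs_right r) by (try lra; left; apply Rpower_pos).
 pose proof (pw_ln_bound (q - 1) (Rabs x) B ltac:(lra) (Rabs_pos_lt _ Hx0) Hx).
 pose proof (Rabs_pos y). pose proof (Rabs_pos (ln (Rabs x))). pose proof (Rpower_pos (Rabs x) (q - 1)).
 assert (Rpower (Rabs x) (q - 1) * 1 * Rabs y * r * Rabs (ln (Rabs x)) =
         r * Rabs y * (Rpower (Rabs x) (q - 1) * Rabs (ln (Rabs x)))) by ring. rewrite H4.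
 apply Rle_trans with (r * B * (1 + Rpower B (q - 1) * B)). apply Rmult_le_compat; nra.
 lra. Qed.

Lemma lim_ln (y : nat -> R) (L : R) : 0 < L -> is_lim_seq y L -> is_lim_seq (fun k => ln (y k)) (ln L).
Proof. intros HL H. apply is_lim_seq_continuous; auto. apply derivable_continuous_pt.
 exists (/ L). apply derivable_pt_lim_ln; auto. Qed.

Lemma lim_exp (y : nat -> R) (L : R) : is_lim_seq y L -> is_lim_seq (fun k => exp (y k)) (exp L).
Proof. intros H. apply is_lim_seq_continuous; auto. apply derivable_continuous_pt. apply derivable_pt_exp. Qed.

Lemma lim_Rpower (y : nat -> R) (L s : R) : 0 < L -> is_lim_seq y L -> is_lim_seq (fun k => Rpower (y k) s) (Rpower L s).
Proof. intros HL H. unfold Rpower. apply lim_exp. apply (is_lim_seq_scal_l _ s (ln L)). apply lim_ln; auto. Qed.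

Lemma ev_nz (x : nat -> R) (l : R) : l <> 0 -> is_lim_seq x l -> eventually (fun k => x k <> 0).
Proof. intros Hl H. apply is_lim_seq_spec in H. simpl in H.
 assert (He : 0 < Rabs l / 2). { apply Rdiv_lt_0_compat. apply Rabs_pos_lt; auto. lra. }
 destruct (H (mkposreal _ He)) as [N HN]. exists N. intros k Hk Hx. specialize (HN k Hk). simpl in HN.
 rewrite Hx in HN. rewrite Rminus_0_l, Rabs_Ropp in HN. pose proof (Rabs_pos_lt _ Hl). lra. Qed.

Lemma lim_abs (x : nat -> R) (l : R) : is_lim_seq x l -> is_lim_seq (fun k => Rabs (x k)) (Rabs l).
Proof. intros H. apply (is_lim_seq_abs x l H). Qed.

Lemma Gq_lim q r (x : nat -> R) (l : R) : 2 <= q -> 0 <= r -> is_lim_seq x l ->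
  is_lim_seq (fun k => Gq q r (x k)) (Gq q r l).
Proof. intros Hq Hr H. destruct (Req_dec l 0) as [->|Hl].
 - replace (Gq q r 0) with 0 by (unfold Gq; rewrite rpow_0; ring).
   apply is_lim_seq_spec in H. apply is_lim_seq_spec. simpl in *. intros eps.
   assert (He : 0 < Rmin 1 (eps / (r + 1))). { apply Rmin_pos. lra. apply Rdiv_lt_0_compat. destruct eps; simpl; lra. lra. }
   destruct (H (mkposreal _ He)) as [N HN]. exists N. intros k Hk. specialize (HN k Hk). simpl in HN.
   rewrite Rminus_0_r in *. pose proof (Rmin_l 1 (eps / (r + 1))). pose proof (Rmin_r 1 (eps / (r + 1))).
   eapply Rle_lt_trans. apply Gq_small; auto. lra.
   apply Rle_lt_trans with ((r + 1) * Rabs (x k)). pose proof (Rabs_pos (x k)). nra.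
   apply Rlt_le_trans with ((r + 1) * (eps / (r + 1))). apply Rmult_lt_compat_l; lra.
   right. field. lra.
 - apply is_lim_seq_ext_loc with (u := fun k => Rpower (Rabs (x k)) q * (r * ln (Rabs (x k)))).
   destruct (ev_nz x l Hl H) as [N HN]. exists N. intros k Hk. rewrite Gq_nz; auto.
   rewrite Gq_nz by auto. apply is_lim_seq_mult'. apply lim_Rpower. apply Rabs_pos_lt; auto. apply lim_abs; auto.
   apply (is_lim_seq_scal_l _ r (ln (Rabs l))). apply lim_ln. apply Rabs_pos_lt; auto. apply lim_abs; auto.
Qed.

Lemma gq_lim q r (x : nat -> R) (l : R) : is_lim_seq x l ->
  is_lim_seq (fun k => gq q r (x k) l) (gq q r l l).
Proof. intros H. destruct (Req_dec l 0) as [->|Hl].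
 - eapply is_lim_seq_ext. intros k. symmetry. replace (gq q r (x k) 0) with 0 by (unfold gq; ring). reflexivity.
   replace (gq q r 0 0) with 0 by (unfold gq; ring). apply is_lim_seq_const.
 - apply is_lim_seq_ext_loc with (u := fun k => Rpower (Rabs (x k)) (q - 2) * x k * l * (r * ln (Rabs (x k)))).
   destruct (ev_nz x l Hl H) as [N HN]. exists N. intros k Hk. rewrite gq_nz; auto.
   rewrite gq_nz by auto. apply is_lim_seq_mult'. apply is_lim_seq_mult'. apply is_lim_seq_mult'.
   apply lim_Rpower. apply Rabs_pos_lt; auto. apply lim_abs; auto. auto. apply is_lim_seq_const.
   apply (is_lim_seq_scal_l _ r (ln (Rabs l))). apply lim_ln. apply Rabs_pos_lt; auto. apply lim_abs; auto.
Qed.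


Lemma summableZ_scal f t : summableZ f -> summableZ (fun n => t * f n).
Proof. intros H. apply summableZ_le with (g := fun n => Rabs t * Rabs (f n) + 0 * Rabs (f n)).
 intros n. rewrite Rabs_mult. lra. apply summableZ_lin; apply summableZ_abs; auto. Qed.

Lemma summableZ_ext f g : (forall n, f n = g n) -> summableZ f -> summableZ g.
Proof. intros H Hf. apply summableZ_le with (g := fun n => Rabs (f n)). intros n; rewrite H; lra.
 apply summableZ_abs; auto. Qed.

Lemma integrand_pow p a b m u n : p = INR (2 * m) -> (0 < m)%nat ->
  normE_integrand p a b u n = a n * (Delta u n) ^ (2 * m) + b n * (u n) ^ (2 * m).
Proof. intros Hp Hm. unfold normE_integrand. rewrite Hp, !rpow_p; auto. Qed.

Lemma integrand_ge0 p a b m u n : p = INR (2 * m) -> (0 < m)%nat ->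
  (forall n, 0 < a n) -> (forall n, 0 < b n) -> 0 <= normE_integrand p a b u n.
Proof. intros Hp Hm Ha Hb. rewrite (integrand_pow p a b m); auto.
 pose proof (even_pow_ge0 (Delta u n) m). pose proof (even_pow_ge0 (u n) m).
 pose proof (Ha n); pose proof (Hb n). nra. Qed.

Lemma E_bound p a b m b0 u : p = INR (2 * m) -> (0 < m)%nat ->
  (forall n, 0 < a n) -> (forall n, 0 < b n) -> 0 < b0 -> (forall n, b0 <= b n) ->
  inE p a b u -> forall n, Rabs (u n) <= 1 + sumZ (normE_integrand p a b u) / b0.
Proof. intros Hp Hm Ha Hb Hb0 Hbb HE n.
 pose proof (term_le_sumZ _ n (fun n => integrand_ge0 p a b m u n Hp Hm Ha Hb) HE).
 rewrite (integrand_pow p a b m) in H; auto.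
 pose proof (even_pow_ge0 (Delta u n) m). pose proof (even_pow_ge0 (u n) m).
 pose proof (Ha n); pose proof (Hbb n).
 assert (b0 * u n ^ (2 * m) <= sumZ (normE_integrand p a b u)) by nra.
 assert (u n ^ (2 * m) <= sumZ (normE_integrand p a b u) / b0).
 { apply Rmult_le_reg_l with b0; auto. replace (b0 * (sumZ (normE_integrand p a b u) / b0)) with (sumZ (normE_integrand p a b u)) by (field; lra). lra. }
 pose proof (abs_le_pow (u n) (2 * m) ltac:(lia)). rewrite even_pow_abs in H6. lra. Qed.

Lemma logterm_Gq q r c u n : logterm q r c u n = c n * Gq q r (u n).
Proof. unfold logterm, Gq. ring. Qed.

Lemma E_in_D p q r a b c m b0 u : p = INR (2 * m) -> (0 < m)%nat -> 2 <= q -> 0 <= r ->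
  (forall n, 0 < a n) -> (forall n, 0 < b n) -> (forall n, 0 < c n) -> 0 < b0 -> (forall n, b0 <= b n) ->
  summableZ c -> inE p a b u -> inD p q r a b c u.
Proof. intros Hp Hm Hq Hr Ha Hb Hc Hb0 Hbb HcS HE. split; auto.
 set (B := 1 + sumZ (normE_integrand p a b u) / b0).
 assert (HB1 : 1 <= B). { unfold B. assert (0 <= sumZ (normE_integrand p a b u) / b0).
   apply Rmult_le_pos. apply sumZ_ge0; auto. intros; apply (integrand_ge0 p a b m); auto.
   left; apply Rinv_0_lt_compat; auto. lra. }
 apply summableZ_le with (g := fun n => (r * (1 + Rpower B q * B)) * c n).
 intros n. rewrite logterm_Gq, Rabs_mult. rewrite (Rabs_right (c n)) by (left; apply Hc). rewrite Rmult_comm.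
 apply Rmult_le_compat_r. left; auto. apply Gq_bound; auto. apply (E_bound p a b m b0); auto.
 apply summableZ_scal; auto. Qed.

Lemma C_summable p q a b c m b0 u : p = INR (2 * m) -> (0 < m)%nat -> 2 <= q ->
  (forall n, 0 < a n) -> (forall n, 0 < b n) -> (forall n, 0 < c n) -> 0 < b0 -> (forall n, b0 <= b n) ->
  summableZ c -> inE p a b u -> summableZ (fun n => c n * rpow (Rabs (u n)) q).
Proof. intros Hp Hm Hq Ha Hb Hc Hb0 Hbb HcS HE.
 set (B := 1 + sumZ (normE_integrand p a b u) / b0).
 assert (HB1 : 1 <= B). { unfold B. assert (0 <= sumZ (normE_integrand p a b u) / b0).
   apply Rmult_le_pos. apply sumZ_ge0; auto. intros; apply (integrand_ge0 p a b m); auto.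
   left; apply Rinv_0_lt_compat; auto. lra. }
 apply summableZ_le with (g := fun n => Rpower B q * c n).
 intros n. rewrite Rabs_mult, (Rabs_right (rpow _ _)) by (apply Rle_ge, rpow_ge0). rewrite (Rabs_right (c n)) by (left; apply Hc).
 rewrite Rmult_comm. apply Rmult_le_compat_r. left; auto.
 destruct (Req_dec (u n) 0) as [->|H]. rewrite rpow_0. left; apply Rpower_pos.
 rewrite rpow_pos by (apply Rabs_pos_lt; auto). apply Rle_Rpower_l. lra. split. apply Rabs_pos_lt; auto.
 apply (E_bound p a b m b0); auto.
 apply summableZ_scal; auto. Qed.

Lemma integrand_scal p a b m u t n : p = INR (2 * m) -> (0 < m)%nat ->
  normE_integrand p a b (fun n => t * u n) n = t ^ (2 * m) * normE_integrand p a b u n.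
Proof. intros Hp Hm. rewrite !(integrand_pow p a b m); auto. unfold Delta.
 replace (t * u (n + 1)%Z - t * u n) with (t * (u (n + 1)%Z - u n)) by ring. rewrite !Rpow_mult_distr. ring. Qed.

Lemma inE_scal p a b m u t : p = INR (2 * m) -> (0 < m)%nat -> inE p a b u -> inE p a b (fun n => t * u n).
Proof. intros Hp Hm H. unfold inE. apply summableZ_ext with (f := fun n => t ^ (2 * m) * normE_integrand p a b u n).
 intros; rewrite (integrand_scal p a b m); auto. apply summableZ_scal; auto. Qed.

Lemma S_scal p a b m u t : p = INR (2 * m) -> (0 < m)%nat ->
  sumZ (normE_integrand p a b (fun n => t * u n)) = t ^ (2 * m) * sumZ (normE_integrand p a b u).
Proof. intros Hp Hm. rewrite <- sumZ_scal. apply sumZ_ext. intros; apply (integrand_scal p a b m); auto. Qed.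

Lemma rpow_inv_le1 p S : 0 < p -> S <= 1 -> rpow S (/ p) <= 1.
Proof. intros Hp HS. unfold rpow. destruct Rle_dec. lra. apply Rpower_le1. lra. auto.
 left; apply Rinv_0_lt_compat; auto. Qed.

Lemma rpow_rpow p S : 0 < p -> 0 <= S -> rpow (rpow S (/ p)) p = S.
Proof. intros Hp HS. unfold rpow at 2. destruct Rle_dec. assert (S = 0) by lra. subst.
 unfold rpow; destruct Rle_dec; auto. lra.
 rewrite rpow_pos by apply Rpower_pos. rewrite Rpower_mult. rewrite Rinv_l by lra. apply Rpower_1. lra. Qed.

Lemma dI_scal p q r a b c u v t : dI p q r a b c u (fun n => t * v n) = t * dI p q r a b c u v.
Proof. unfold dI. rewrite Rmult_minus_distr_l. rewrite <- !sumZ_scal. f_equal; apply sumZ_ext; intros n; unfold Delta; ring. Qed.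

Lemma dI_diag p q r a b c m u : p = INR (2 * m) -> (0 < m)%nat ->
  dI p q r a b c u u = sumZ (normE_integrand p a b u) - sumZ (logterm q r c u).
Proof. intros Hp Hm. unfold dI. f_equal; apply sumZ_ext; intros n.
 - rewrite (integrand_pow p a b m); auto. rewrite Hp.

   replace (a n * rpow (Rabs (Delta u n)) (INR (2 * m) - 2) * Delta u n * Delta u n)
     with (a n * (rpow (Rabs (Delta u n)) (INR (2 * m) - 2) * Delta u n) * Delta u n) by ring.
   replace (b n * rpow (Rabs (u n)) (INR (2 * m) - 2) * u n * u n)
     with (b n * (rpow (Rabs (u n)) (INR (2 * m) - 2) * u n) * u n) by ring.
   rewrite !rpow_p2 by auto. rewrite <- (pow_split (Delta u n) (2 * m)), <- (pow_split (u n) (2 * m)) by lia. ring.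
 - rewrite logterm_Gq, <- gq_diag. unfold gq. ring. Qed.

Lemma Ifun_eq p q r a b c u : 0 < p -> 0 <= sumZ (normE_integrand p a b u) ->
  Ifun p q r a b c u = / p * sumZ (normE_integrand p a b u) + r / (q * q) * sumZ (fun n => c n * rpow (Rabs (u n)) q)
     - / q * sumZ (logterm q r c u).
Proof. intros Hp HS. unfold Ifun, normE. rewrite rpow_rpow; auto. Qed.

Lemma dual_bound p q r a b c u v (eps : R) :
  Rbar_le (Rbar_mult (dualnorm p q r a b c u) (1 + normE p a b u)) eps ->
  inD p q r a b c v -> normE p a b v <= 1 -> Rabs (dI p q r a b c u v) <= eps.
Proof. intros H Hv Hv1.
 pose proof (Lub_Rbar_correct (fun t => exists v, inD p q r a b c v /\ normE p a b v <= 1 /\ t = Rabs (dI p q r a b c u v))) as [Hub _].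
 assert (Hle : Rbar_le (Rabs (dI p q r a b c u v)) (dualnorm p q r a b c u)).
 { apply Hub. exists v; auto. }
 assert (Hn : 0 <= normE p a b u) by apply rpow_ge0.
 revert H Hle Hn. generalize (normE p a b u). intros nu H Hle Hn.
 unfold dualnorm in *. destruct (Lub_Rbar _) as [d| |]; simpl in *.
 - assert (0 <= Rabs (dI p q r a b c u v)) by apply Rabs_pos. nra.
 - destruct Rle_dec as [H1|H1]; [destruct Rle_lt_or_eq_dec|]; simpl in H; try lra; contradiction.
 - contradiction.
Qed.


Lemma pow_le_base t n : 0 <= t <= 1 -> (0 < n)%nat -> t ^ n <= t.
Proof. intros Ht Hn. replace n with (S (n - 1)) by lia. simpl.
 pose proof (pow_le t (n - 1) (proj1 Ht)).
 assert (t ^ (n - 1) <= 1). { rewrite <- (pow1 (n - 1)). apply pow_incr. lra. }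
 nra. Qed.

Lemma ev_bound (x : nat -> R) N M0 : (forall k, (N <= k)%nat -> x k <= M0) -> exists M, forall k, x k <= M.
Proof. intros H. assert (forall N', exists M, forall k, (k < N')%nat -> x k <= M).
 { induction N'. exists 0. intros; lia. destruct IHN' as [M HM]. exists (Rmax M (x N')).
   intros k Hk. destruct (Nat.eq_dec k N'). subst; apply Rmax_r. eapply Rle_trans. apply HM. lia. apply Rmax_l. }
 destruct (H0 N) as [M HM]. exists (Rmax M M0). intros k. destruct (le_lt_dec N k).
 eapply Rle_trans. apply H; auto. apply Rmax_r. eapply Rle_trans. apply HM; auto. apply Rmax_l. Qed.

Lemma fatou_nat (F : nat -> nat -> R) (G : nat -> R) (M : R) :
  (forall k n, 0 <= F k n) -> (forall k, ex_series (F k)) -> (forall k, Series (F k) <= M) ->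
  (forall n, is_lim_seq (fun k => F k n) (G n)) -> ex_series G.
Proof. intros HF HFs HM Hl.
 assert (HG : forall n, 0 <= G n).
 { intros n. assert (Rbar_le 0 (G n)). apply (is_lim_seq_le (fun _ => 0) (fun k => F k n)); auto. apply is_lim_seq_const. auto. }
 assert (Hb : forall N, sum_f_R0 G N <= M).
 { intros N. assert (Rbar_le (sum_f_R0 G N) M).
   apply (is_lim_seq_le (fun k => sum_f_R0 (F k) N) (fun _ => M)). intros k.
   eapply Rle_trans. apply sum_le_Series; auto. auto. apply sum_f_lim; auto. apply is_lim_seq_const. auto. }
 apply ex_series_Reals_1. apply growing_cv. intros n. simpl. pose proof (HG (S n)). lra.
 exists M. intros x [i ->]. auto. Qed.

Lemma fatouZ (F : nat -> Z -> R) (G : Z -> R) (M : R) :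
  (forall k n, 0 <= F k n) -> (forall k, summableZ (F k)) -> (forall k, sumZ (F k) <= M) ->
  (forall n, is_lim_seq (fun k => F k n) (G n)) -> summableZ G.
Proof. intros HF HFs HM Hl.
 assert (HG : forall n, 0 <= G n).
 { intros n. assert (Rbar_le 0 (G n)). apply (is_lim_seq_le (fun _ => 0) (fun k => F k n)); auto. apply is_lim_seq_const. auto. }
 split.
 - eapply ex_series_ext. intros n. symmetry. apply Rabs_right. apply Rle_ge, HG.
   apply (fatou_nat (fun k => posZ (F k)) (posZ G) M); auto.
   + intros; apply HF.
   + intros; apply sZ_pos; auto.
   + intros k. pose proof (Series_ge0 (negZ (F k)) (fun n => HF _ _) (sZ_neg _ (HFs k))). specialize (HM k). unfold sumZ in HM. lra.
   + intros; apply Hl.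
 - eapply ex_series_ext. intros n. symmetry. apply Rabs_right. apply Rle_ge, HG.
   apply (fatou_nat (fun k => negZ (F k)) (negZ G) M); auto.
   + intros; apply HF.
   + intros; apply sZ_neg; auto.
   + intros k. pose proof (Series_ge0 (posZ (F k)) (fun n => HF _ _) (sZ_pos _ (HFs k))). specialize (HM k). unfold sumZ in HM. lra.
   + intros; apply Hl.
Qed.

Lemma rpow_lim0 (x : nat -> R) p : 0 < p -> (forall k, 0 <= x k) -> is_lim_seq x 0 ->
  is_lim_seq (fun k => rpow (x k) (/ p)) 0.
Proof. intros Hp Hx H. apply is_lim_seq_spec in H. apply is_lim_seq_spec. simpl in *. intros eps.
 destruct (H (mkposreal (Rpower eps p) (Rpower_pos _ _))) as [N HN]. exists N. intros k Hk.
 specialize (HN k Hk). simpl in HN. rewrite Rminus_0_r in *. rewrite Rabs_right in HN by (apply Rle_ge; auto).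
 rewrite Rabs_right by (apply Rle_ge, rpow_ge0). unfold rpow. destruct Rle_dec. destruct eps; simpl; lra.
 replace (pos eps) with (Rpower (Rpower eps p) (/ p)). apply Rlt_Rpower_l. apply Rinv_0_lt_compat; auto. lra.
 rewrite Rpower_mult, Rinv_r by lra. apply Rpower_1. destruct eps; simpl; lra. Qed.

Lemma lim_integrand p a b m (v : nat -> Z -> R) (w : Z -> R) : p = INR (2 * m) -> (0 < m)%nat ->
  (forall n, is_lim_seq (fun k => v k n) (w n)) ->
  forall n, is_lim_seq (fun k => normE_integrand p a b (v k) n) (normE_integrand p a b w n).
Proof. intros Hp Hm H n. rewrite (integrand_pow p a b m); auto.
 eapply is_lim_seq_ext. intros k. symmetry. apply (integrand_pow p a b m); auto.
 apply is_lim_seq_plus'; apply is_lim_seq_mult'; try apply is_lim_seq_const; apply lim_pow; auto.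
 unfold Delta. apply is_lim_seq_minus'; auto. Qed.

Lemma domX (al be s1 t1 s2 t2 d : R) (m : nat) : 0 < al -> 0 < be -> 0 < d -> (0 < m)%nat ->
  Rabs (al * s1 ^ (2 * m - 1) * t1 + be * s2 ^ (2 * m - 1) * t2) <=
  d * (al * s1 ^ (2 * m) + be * s2 ^ (2 * m)) + (/ d) ^ (2 * m - 1) * (al * t1 ^ (2 * m) + be * t2 ^ (2 * m)).
Proof. intros Hal Hbe Hd Hm.
 pose proof (young s1 t1 d (2 * m) Hd ltac:(lia)). pose proof (young s2 t2 d (2 * m) Hd ltac:(lia)).
 rewrite !even_pow_abs in H, H0.
 eapply Rle_trans. apply Rabs_triang. rewrite !Rabs_mult, <- !RPow_abs, (Rabs_right al), (Rabs_right be) by lra.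
 assert (al * Rabs s1 ^ (2 * m - 1) * Rabs t1 <= al * (d * s1 ^ (2 * m) + (/ d) ^ (2 * m - 1) * t1 ^ (2 * m))).
 { rewrite Rmult_assoc. apply Rmult_le_compat_l; lra. }
 assert (be * Rabs s2 ^ (2 * m - 1) * Rabs t2 <= be * (d * s2 ^ (2 * m) + (/ d) ^ (2 * m - 1) * t2 ^ (2 * m))).
 { rewrite Rmult_assoc. apply Rmult_le_compat_l; lra. }
 lra. Qed.

Lemma convex_even (s t : R) (m : nat) : (s - t) ^ (2 * m) <= 2 ^ (2 * m) * (s ^ (2 * m) + t ^ (2 * m)).
Proof. pose proof (convex_pow s t (2 * m)). rewrite !even_pow_abs in H. auto. Qed.

Lemma domD p a b m (u w : Z -> R) n : p = INR (2 * m) -> (0 < m)%nat ->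
  (forall n, 0 < a n) -> (forall n, 0 < b n) ->
  normE_integrand p a b (fun n => u n - w n) n <= 2 ^ (2 * m) * (normE_integrand p a b u n + normE_integrand p a b w n).
Proof. intros Hp Hm Ha Hb. rewrite !(integrand_pow p a b m); auto. unfold Delta.
 replace (u (n + 1)%Z - w (n + 1)%Z - (u n - w n)) with ((u (n + 1)%Z - u n) - (w (n + 1)%Z - w n)) by ring.
 pose proof (convex_even (u (n + 1)%Z - u n) (w (n + 1)%Z - w n) m). pose proof (convex_even (u n) (w n) m).
 pose proof (Ha n). pose proof (Hb n).
 apply Rle_trans with (a n * (2 ^ (2 * m) * ((u (n + 1)%Z - u n) ^ (2 * m) + (w (n + 1)%Z - w n) ^ (2 * m))) +
                       b n * (2 ^ (2 * m) * (u n ^ (2 * m) + w n ^ (2 * m)))).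
 apply Rplus_le_compat; apply Rmult_le_compat_l; lra. right; ring. Qed.


Theorem lemma4p2 (p q r : R) (a b c : Z -> R)
  (Hp : 1 < p) (Hpq : p < q) (Hp2 : exists m : nat, (0 < m)%nat /\ p / 2 = INR m)
  (Hr : 1 <= r)
  (Ha : forall n, 0 < a n) (Hb : forall n, 0 < b n) (Hc : forall n, 0 < c n)
  (HC1 : cond_C1 b) (HC2 : cond_C2 c)
  (d0 : R) (Hd0 : 0 < d0) (uk : nat -> Z -> R)
  (Hcer : Cerami_seq p q r a b c d0 uk) :
  exists phi : nat -> nat, (forall k, (phi k < phi (S k))%nat) /\
  exists w : Z -> R, inD p q r a b c w /\
    is_lim_seq (fun k => normE p a b (fun n => uk (phi k) n - w n)) 0.
Proof.
  destruct Hp2 as [m [Hm Hpm]].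
  assert (Hpm' : p = INR (2 * m)) by (rewrite mult_INR; simpl; lra).
  clear Hpm.
  assert (Hp2 : 2 <= p). { rewrite Hpm'. replace 2 with (INR 2) by (simpl; ring). apply le_INR. lia. }
  assert (Hq2 : 2 <= q) by lra.
  assert (Hr0 : 0 <= r) by lra.
  destruct HC1 as [[b0 [Hb0 Hbb]] _]. destruct HC2 as [_ HcS].
  destruct Hcer as [HD [HI Hdual]].
  set (S := fun u => sumZ (normE_integrand p a b u)).
  set (Lg := fun u => sumZ (logterm q r c u)).
  assert (HEinD : forall u, inE p a b u -> inD p q r a b c u).
  { intros u Hu. apply (E_in_D p q r a b c m b0); auto. }
  assert (HS0 : forall u, inE p a b u -> 0 <= S u).
  { intros u Hu. apply sumZ_ge0; auto. intros; apply (integrand_ge0 p a b m); auto. }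
  assert (StepA : forall eps, 0 < eps -> eventually (fun k => forall v, inD p q r a b c v ->
             normE p a b v <= 1 -> Rabs (dI p q r a b c (uk k) v) <= eps)).
  { intros eps He. destruct (Hdual eps He) as [N HN]. exists N. intros k Hk v Hv Hv1.
    apply (dual_bound p q r a b c (uk k) v eps); auto. }
  assert (Hscal : forall u, inE p a b u -> let t := / (1 + S u) in
            inD p q r a b c (fun n => t * u n) /\ normE p a b (fun n => t * u n) <= 1 /\ 0 < t).
  { intros u Hu t. pose proof (HS0 u Hu).
    assert (Ht : 0 < t <= 1). { unfold t. split. apply Rinv_0_lt_compat; lra.
      rewrite <- Rinv_1. apply Rinv_le_contravar; lra. }
    split. apply HEinD. apply (inE_scal p a b m); auto. split; [|lra].
    unfold normE. rewrite (S_scal p a b m); auto. apply rpow_inv_le1. lra.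
    apply Rle_trans with (t * S u). apply Rmult_le_compat_r. exact H. apply pow_le_base. lra. lia.
    replace (t * S u) with (S u / (1 + S u)) by (unfold t; field; lra).
    apply Rmult_le_reg_r with (1 + S u); [lra|]. unfold Rdiv. rewrite Rmult_assoc, Rinv_l; lra. }
  assert (StepE : forall eps, 0 < eps -> eventually (fun k => Rabs (S (uk k) - Lg (uk k)) <= eps * (1 + S (uk k)))).
  { intros eps He. destruct (StepA eps He) as [N HN]. exists N. intros k Hk.
    destruct (HD k) as [HE _]. destruct (Hscal (uk k) HE) as [H1 [H2 H3]].
    specialize (HN k Hk _ H1 H2). rewrite dI_scal in HN. rewrite (dI_diag p q r a b c m) in HN; auto.
    rewrite Rabs_mult, Rabs_right in HN by lra. fold (S (uk k)) in HN. fold (Lg (uk k)) in HN.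
    pose proof (HS0 _ HE). apply Rmult_le_reg_l with (/ (1 + S (uk k))). apply Rinv_0_lt_compat; lra.
    replace (/ (1 + S (uk k)) * (eps * (1 + S (uk k)))) with eps by (field; lra). auto. }
  assert (Hip : 0 < / p) by (apply Rinv_0_lt_compat; lra).
  assert (Hiq : 0 < / q) by (apply Rinv_0_lt_compat; lra).
  assert (Hipq : / q < / p) by (apply Rinv_lt_contravar; nra).
  set (eps0 := (q * / p - 1) / 2).
  assert (He0 : 0 < eps0). { unfold eps0. assert (q * / p > p * / p) by (apply Rmult_lt_compat_r; lra).
    rewrite Rinv_r in H by lra. lra. }
  assert (He0q : eps0 * / q = (/ p - / q) / 2). { unfold eps0. field. lra. }
  destruct (StepE eps0 He0) as [N1 HN1].
  pose proof HI as HI'. apply is_lim_seq_spec in HI'. destruct (HI' (mkposreal 1 Rlt_0_1)) as [N2 HN2]. simpl in HN2.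
  set (kap := (/ p - / q) / 2).
  assert (Hkap : 0 < kap) by (unfold kap; lra).
  assert (Hbd : exists M, forall k, S (uk k) <= M).
  { apply (ev_bound _ (N1 + N2) ((d0 + 1 + kap) / kap)). intros k Hk.
    specialize (HN1 k ltac:(lia)). specialize (HN2 k ltac:(lia)).
    destruct (HD k) as [HE _]. pose proof (HS0 _ HE).
    rewrite (Ifun_eq p q r a b c) in HN2 by first [lra | exact H]. fold (S (uk k)) in HN2. fold (Lg (uk k)) in HN2.
    pose proof (C_summable p q a b c m b0 (uk k) Hpm' Hm Hq2 Ha Hb Hc Hb0 Hbb HcS HE).
    assert (HC0 : 0 <= sumZ (fun n => c n * rpow (Rabs (uk k n)) q)).
    { apply sumZ_ge0; auto. intros n. apply Rmult_le_pos. left; auto. apply rpow_ge0. }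
    assert (0 <= r / (q * q) * sumZ (fun n => c n * rpow (Rabs (uk k n)) q)).
    { apply Rmult_le_pos; auto. apply Rmult_le_pos; auto. left; apply Rinv_0_lt_compat; nra. }
    apply Rabs_def2 in HN2. apply Rabs_le_between in HN1.
    assert (/ q * Lg (uk k) <= / q * (S (uk k) + eps0 * (1 + S (uk k)))) by (apply Rmult_le_compat_l; lra).
    assert (/ q * (S (uk k) + eps0 * (1 + S (uk k))) = / q * S (uk k) + kap * (1 + S (uk k))).
    { unfold kap. rewrite <- He0q. ring. }
    assert (kap * S (uk k) <= d0 + 1 + kap).
    { unfold kap in *. lra. }
    apply Rmult_le_reg_l with kap; auto. replace (kap * ((d0 + 1 + kap) / kap)) with (d0 + 1 + kap) by (field; lra). auto. }
  destruct Hbd as [M HM].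
  assert (HM0 : 0 <= M). { destruct (HD O) as [HE _]. pose proof (HS0 _ HE). pose proof (HM O). lra. }
  assert (HSL : is_lim_seq (fun k => S (uk k) - Lg (uk k)) 0).
  { apply is_lim_seq_spec. intros eps. simpl.
    assert (He : 0 < eps / (2 * (1 + M))). { apply Rdiv_lt_0_compat. destruct eps; simpl; lra. lra. }
    destruct (StepE _ He) as [N HN]. exists N. intros k Hk. specialize (HN k Hk). rewrite Rminus_0_r.
    eapply Rle_lt_trans. apply HN. apply Rle_lt_trans with (eps / (2 * (1 + M)) * (1 + M)).
    apply Rmult_le_compat_l. lra. pose proof (HM k); lra.
    replace (eps / (2 * (1 + M)) * (1 + M)) with (eps / 2) by (field; lra). destruct eps; simpl; lra. }
  set (B := 1 + M / b0).
  assert (HB1 : 1 <= B). { unfold B. assert (0 <= M / b0) by (apply Rmult_le_pos; [lra| left; apply Rinv_0_lt_compat; lra]). lra. }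
  assert (HB : forall k n, Rabs (uk k n) <= B).
  { intros k n. destruct (HD k) as [HE _]. eapply Rle_trans. apply (E_bound p a b m b0); eauto.
    unfold B. apply Rplus_le_compat_l. apply Rmult_le_compat_r. left; apply Rinv_0_lt_compat; lra. apply HM. }
  destruct (diagonal uk B HB) as [phi [w [Hphi Hw]]].
  exists phi. split. exact Hphi.
  set (v := fun k => uk (phi k)).
  assert (HwB : forall n, Rabs (w n) <= B).
  { intros n. assert (Rbar_le (Rabs (w n)) B).
    apply (is_lim_seq_le (fun k => Rabs (v k n)) (fun _ => B)). intros; apply HB.
    apply (is_lim_seq_abs _ (w n)). apply Hw. apply is_lim_seq_const. auto. }
  assert (HvE : forall k, inE p a b (v k)). { intros k. apply (HD (phi k)). }
  assert (HwE : inE p a b w).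
  { apply (fatouZ (fun k => normE_integrand p a b (v k)) _ M).
    intros; apply (integrand_ge0 p a b m); auto. intros; apply HvE. intros; apply HM.
    apply (lim_integrand p a b m); auto. }
  assert (HwD : inD p q r a b c w) by auto.
  exists w. split. exact HwD.
  set (K1 := r * (1 + Rpower B q * B)).
  assert (HK1 : 0 <= K1). { unfold K1. pose proof (Rpower_pos B q). apply Rmult_le_pos; nra. }
  assert (HcS0 : forall n, 0 <= c n) by (intros; left; auto).
  assert (HLv : is_lim_seq (fun k => Lg (v k)) (Lg w)).
  { unfold Lg. apply (vitaliZ _ _ (fun _ => c) c (sumZ c)).
    - intros n. eapply is_lim_seq_ext. intros k. symmetry. apply logterm_Gq.
      rewrite logterm_Gq. apply (is_lim_seq_scal_l _ (c n) (Gq q r (w n))). apply Gq_lim; [lra|lra|apply Hw].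
    - auto.
    - auto.
    - intros; apply Rle_refl.
    - auto.
    - auto.
    - intros d Hd. exists K1. intros k n. rewrite logterm_Gq, Rabs_mult, (Rabs_right (c n)) by (left; apply Hc).
      assert (Rabs (Gq q r (v k n)) <= K1). { apply Gq_bound; auto. apply HB. }
      pose proof (Hc n). pose proof (Rabs_pos (Gq q r (v k n))). nra.
    - apply HwD. }
  set (X := fun k n => a n * Delta (v k) n ^ (2 * m - 1) * Delta w n + b n * v k n ^ (2 * m - 1) * w n).
  set (Y := fun k n => c n * gq q r (v k n) (w n)).
  assert (HdI : forall k, dI p q r a b c (v k) w = sumZ (X k) - sumZ (Y k)).
  { intros k. unfold dI. f_equal; apply sumZ_ext; intros n.
    - unfold X. rewrite Hpm'.
      replace (a n * rpow (Rabs (Delta (v k) n)) (INR (2 * m) - 2) * Delta (v k) n * Delta w n)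
        with (a n * (rpow (Rabs (Delta (v k) n)) (INR (2 * m) - 2) * Delta (v k) n) * Delta w n) by ring.
      replace (b n * rpow (Rabs (v k n)) (INR (2 * m) - 2) * v k n * w n)
        with (b n * (rpow (Rabs (v k n)) (INR (2 * m) - 2) * v k n) * w n) by ring.
      rewrite !rpow_p2 by auto. auto.
    - unfold Y, gq. ring. }
  assert (HXw : sumZ (fun n => a n * Delta w n ^ (2 * m - 1) * Delta w n + b n * w n ^ (2 * m - 1) * w n) = S w).
  { unfold S. apply sumZ_ext. intros n. rewrite (integrand_pow p a b m); auto.
    rewrite <- (pow_split (Delta w n) (2 * m)), <- (pow_split (w n) (2 * m)) by lia. ring. }
  assert (HYw : sumZ (fun n => c n * gq q r (w n) (w n)) = Lg w).
  { unfold Lg. apply sumZ_ext. intros n. rewrite gq_diag, logterm_Gq. auto. }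
  assert (HX : is_lim_seq (fun k => sumZ (X k)) (S w)).
  { rewrite <- HXw. apply (vitaliZ _ _ (fun k => normE_integrand p a b (v k)) (normE_integrand p a b w) M).
    - intros n. unfold X. apply is_lim_seq_plus'; apply is_lim_seq_mult'; try apply is_lim_seq_const;
      apply is_lim_seq_mult'; try apply is_lim_seq_const; apply lim_pow.
      unfold Delta. apply is_lim_seq_minus'; apply Hw. apply Hw.
    - intros; apply (integrand_ge0 p a b m); auto.
    - intros; apply HvE.
    - intros; apply HM.
    - intros; apply (integrand_ge0 p a b m); auto.
    - exact HwE.
    - intros d Hd. exists ((/ d) ^ (2 * m - 1)). intros k n. unfold X.
      rewrite !(integrand_pow p a b m); auto. apply domX; auto.
    - apply summableZ_ext with (f := normE_integrand p a b w); auto. intros n.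
      rewrite (integrand_pow p a b m); auto.
      rewrite <- (pow_split (Delta w n) (2 * m)), <- (pow_split (w n) (2 * m)) by lia. ring. }
  set (K2 := r * (1 + Rpower B (q - 1) * B) * B).
  assert (HY : is_lim_seq (fun k => sumZ (Y k)) (Lg w)).
  { rewrite <- HYw. apply (vitaliZ _ _ (fun _ => c) c (sumZ c)).
    - intros n. unfold Y. apply (is_lim_seq_scal_l _ (c n) (gq q r (w n) (w n))). apply gq_lim; apply Hw.
    - auto.
    - auto.
    - intros; apply Rle_refl.
    - auto.
    - auto.
    - intros d Hd. exists K2. intros k n. unfold Y. rewrite Rabs_mult, (Rabs_right (c n)) by (left; apply Hc).
      assert (Rabs (gq q r (v k n) (w n)) <= K2). { apply gq_bound; auto. apply HB. }
      pose proof (Hc n). pose proof (Rabs_pos (gq q r (v k n) (w n))). nra.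
    - apply summableZ_ext with (f := logterm q r c w). intros n. rewrite gq_diag, logterm_Gq; auto. apply HwD. }
  assert (HdIlim : is_lim_seq (fun k => dI p q r a b c (v k) w) (S w - Lg w)).
  { eapply is_lim_seq_ext. intros k. symmetry. apply HdI. apply is_lim_seq_minus'; auto. }
  assert (HdI0 : is_lim_seq (fun k => dI p q r a b c (v k) w) 0).
  { destruct (Hscal w HwE) as [Ht1 [Ht2 Ht3]]. set (t := / (1 + S w)) in *.
    apply is_lim_seq_spec. intros eps. simpl.
    assert (He : 0 < eps * t / 2). { destruct eps as [e ep]; simpl. apply Rmult_lt_0_compat; [nra|lra]. }
    destruct (StepA _ He) as [N HN]. exists N. intros k Hk. rewrite Rminus_0_r.
    pose proof (SI_ge phi Hphi k). specialize (HN (phi k) ltac:(lia) _ Ht1 Ht2).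
    rewrite dI_scal, Rabs_mult, Rabs_right in HN by lra. fold (v k) in HN.
    apply Rmult_lt_reg_l with t; auto. eapply Rle_lt_trans. apply HN. destruct eps; simpl; nra. }
  assert (HSLw : S w = Lg w).
  { pose proof (is_lim_seq_unique _ _ HdIlim). rewrite (is_lim_seq_unique _ _ HdI0) in H.
    injection H. lra. }
  assert (HSv : is_lim_seq (fun k => S (v k)) (S w)).
  { assert (H1 : is_lim_seq (fun k => S (v k) - Lg (v k)) 0).
    { apply (lim_sub (fun k => S (uk k) - Lg (uk k)) _ 0 O HSL). intros k _. exists (phi k).
      split; auto. apply SI_ge; auto. }
    eapply is_lim_seq_ext. intros k. instantiate (1 := fun k => (S (v k) - Lg (v k)) + Lg (v k)). simpl. ring.
    replace (S w) with (0 + Lg w) by lra. apply is_lim_seq_plus'; auto. }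
  assert (HD0 : is_lim_seq (fun k => sumZ (normE_integrand p a b (fun n => v k n - w n))) 0).
  { apply (strongZ (fun k => normE_integrand p a b (v k)) (normE_integrand p a b w) _ (2 ^ (2 * m))).
    - apply pow_lt; lra.
    - intros; apply (integrand_ge0 p a b m); auto.
    - intros; apply (integrand_ge0 p a b m); auto.
    - intros; apply (integrand_ge0 p a b m); auto.
    - intros; apply HvE.
    - auto.
    - intros k. apply summableZ_le with (g := fun n => 2 ^ (2 * m) * normE_integrand p a b (v k) n + 2 ^ (2 * m) * normE_integrand p a b w n).
      intros n. rewrite Rabs_right by (apply Rle_ge, (integrand_ge0 p a b m); auto).
      eapply Rle_trans. apply (domD p a b m); auto. lra.
      apply summableZ_lin; auto. apply HvE.
    - intros k n. apply (domD p a b m); auto.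
    - intros n.
      eapply is_lim_seq_ext. intros k. symmetry. apply (integrand_pow p a b m); auto.
      replace 0 with (a n * 0 ^ (2 * m) + b n * 0 ^ (2 * m)) by (rewrite pow_i by lia; ring).
      apply is_lim_seq_plus'; apply is_lim_seq_mult'; try apply is_lim_seq_const; apply lim_pow.
      + unfold Delta. replace 0 with ((w (n + 1)%Z - w (n + 1)%Z) - (w n - w n)) by ring.
        apply is_lim_seq_minus'; apply is_lim_seq_minus'; try apply Hw; apply is_lim_seq_const.
      + replace 0 with (w n - w n) by ring. apply is_lim_seq_minus'. apply Hw. apply is_lim_seq_const.
    - apply (lim_integrand p a b m); auto.
    - exact HSv. }
  unfold normE. apply rpow_lim0. lra.
  intros k. apply sumZ_ge0. intros; apply (integrand_ge0 p a b m); auto.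
  apply summableZ_le with (g := fun n => 2 ^ (2 * m) * normE_integrand p a b (v k) n + 2 ^ (2 * m) * normE_integrand p a b w n).
  intros n. rewrite Rabs_right by (apply Rle_ge, (integrand_ge0 p a b m); auto).
  eapply Rle_trans. apply (domD p a b m); auto. right. unfold v. ring.
  apply summableZ_lin; auto. apply HvE.
  exact HD0.
Qed.
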